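(* For all positive integers $n$ and $d$, there exists a family of $n\cdot d+1$ mass distributions in $\mathbb{R}^d$ that cannot be simultaneously bisected by any set of $n$ hyperplanes.
   Context: A mass distribution $\mu$ on $\mathbb{R}^d$ is a measure such that all open subsets are measurable, $0<\mu(\mathbb{R}^d)<\infty$, and $\mu(S)=0$ for every lower-dimensional subset $S$. For a finite set $\mathcal{L}$ of oriented hyperplanes, each $\ell\in\mathcal{L}$ has positive side $\ell^+=\{x:g(x)\ge 0\}$ for a defining affine function $g(x)=a_1x_1+\dots+a_dx_d+a_0$; hyperplanes at infinity ($g\equiv a_0\neq0$) are allowed, with $\ell^+=\mathbb{R}^d$, $\ell^-=\emptyset$. Let $\lambda(p)$ be the number of hyperplanes having $p$ on their positive side, $R^+=\{p:\lambda(p)\text{ even}\}$, $R^-=\{p:\lambda(p)\text{ odd}\}$. $\mathcal{L}$ simultaneously bisects $\mu_1,\dots,\mu_k$ if $\mu_i(R^+)=\mu_i(R^-)$ for all $i$; an unoriented set bisects if some orientation does. *)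

(* Defs.v *)
From HB Require Import structures.
From mathcomp Require Import all_boot all_order all_algebra.
From mathcomp Require Import all_classical all_reals all_analysis.

Set Implicit Arguments.
Unset Strict Implicit.
Unset Printing Implicit Defensive.

Import Order.TTheory GRing.Theory Num.Theory numFieldNormedType.Exports.
Local Open Scope classical_set_scope.
Local Open Scope ring_scope.

Definition Rd (R : realType) (d : nat) :=
  g_sigma_algebraType [set A : set 'rV[R]_d | open A].

Definition affine_eval (R : realType) (d : nat) (g : 'rV[R]_d * R)
  (x : 'rV[R]_d) : R :=
  \sum_(i < d) g.1 ord0 i * x ord0 i + g.2.

(* (a, a_0) defines an oriented hyperplane (possibly the hyperplane at
   infinity, when a = 0 and a_0 <> 0) iff it is not identically zero. *)
Definition oriented_hyperplane (R : realType) (d : nat) (g : 'rV[R]_d * R) :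
  Prop := g.1 != 0 \/ g.2 != 0.

Definition pos_side (R : realType) (d : nat) (g : 'rV[R]_d * R) :
  set (Rd R d) := [set x | 0 <= affine_eval g x].

Definition lambda (R : realType) (d n : nat) (L : 'I_n -> 'rV[R]_d * R)
  (p : Rd R d) : nat :=
  #|[set j : 'I_n | `[< pos_side (L j) p >]]|.

Definition Rplus (R : realType) (d n : nat) (L : 'I_n -> 'rV[R]_d * R) :
  set (Rd R d) := [set p | ~~ odd (lambda L p)].

Definition Rminus (R : realType) (d n : nat) (L : 'I_n -> 'rV[R]_d * R) :
  set (Rd R d) := [set p | odd (lambda L p)].

(* A mass distribution on R^d: a measure on (a sigma-algebra containing) the
   open sets, with 0 < mu(R^d) < oo, vanishing on lower-dimensional sets,
   i.e. on every (affine) hyperplane (every proper affine subspace is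
   contained in one). *)
Definition mass_distribution (R : realType) (d : nat)
  (mu : {measure set (Rd R d) -> \bar R}) : Prop :=
  (0 < mu setT)%E /\ (mu setT < +oo)%E /\
  forall g : 'rV[R]_d * R, g.1 != 0 ->
    mu [set x : Rd R d | affine_eval g x = 0] = 0%E.

Definition bisects (R : realType) (d n k : nat) (L : 'I_n -> 'rV[R]_d * R)
  (mu : 'I_k -> {measure set (Rd R d) -> \bar R}) : Prop :=
  forall i, mu i (Rplus L) = mu i (Rminus L).

(* Main.v *)
Require Import Defs.
From HB Require Import structures.
From mathcomp Require Import all_boot all_order all_algebra.
From mathcomp Require Import all_classical all_reals all_analysis.
From mathcomp Require Import polyrcf measurable_realfun.
Import Order.TTheory GRing.Theory Num.Theory numFieldNormedType.Exports.
Local Open Scope classical_set_scope.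
Local Open Scope ring_scope.
Set Implicit Arguments.
Unset Strict Implicit.
Unset Printing Implicit Defensive.

Section S.
Variables (R : realType) (d' : nat).
Local Notation d := d'.+1.

Definition gam (t : R) : 'rV[R]_d := \row_(i < d) t ^+ i.+1.

Lemma gam_cont : continuous gam.
Proof.
move=> t A /nbhs_ballP [e e0 eA].
have H : \forall x \near t, forall i : 'I_d, ball (t ^+ i.+1) e (x ^+ i.+1).
  apply: (@filter_forall R 'I_d (fun i : 'I_d => fun x : R => ball (t ^+ i.+1) e (x ^+ i.+1)) (nbhs t) _) => i.
  exact: (@exprn_continuous R i.+1 t) _ (nbhsx_ballx _ _ e0).
apply: filterS H => x Hx; apply: eA.
split => // i j; rewrite (ord1 i) !mxE.
exact: Hx j.
Qed.

Lemma gam_meas : measurable_fun [set: measurableTypeR R] (gam : measurableTypeR R -> Rd R d).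
Proof.
have h := @measurability _ _ _ _ setT (gam : measurableTypeR R -> Rd R d) [set A : set 'rV[R]_d | open A].
apply: h => //.
move=> _ [A oA <-].
apply: measurableI => //.
apply: open_measurable.
apply: open_comp => //.
move=> x _; exact: gam_cont.
Qed.

Definition Ik (k : nat) : set (measurableTypeR R) := [set` `]k%:R, k%:R + 1[%R].
Lemma Ik_meas k : measurable (Ik k).
Proof. exact: measurable_itv. Qed.

Definition muk (k : nat) : {measure set (Rd R d) -> \bar R} :=
  @measure_function_pushforward__canonical__measure_function_Measure _ _ _ _ _
    (mrestr lebesgue_measure (Ik_meas k)) _ gam_meas.

Lemma mukE k A : muk k A = lebesgue_measure (gam @^-1` A `&` Ik k).
Proof. by []. Qed.

Lemma Ik1 k : lebesgue_measure (Ik k) = 1%E.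
Proof.
rewrite /Ik lebesgue_measure_itv /= lte_fin ltrDl ltr01.
by rewrite -EFinB addrAC subrr add0r.
Qed.

Definition Pg (g : 'rV[R]_d * R) : {poly R} :=
  \poly_(i < d.+1) (if i is j.+1 then g.1 ord0 (inord j) else g.2).

Lemma Pg_horner g t : (Pg g).[t] = affine_eval g (gam t).
Proof.
rewrite horner_poly big_ord_recl /= expr0 mulr1 /affine_eval addrC; congr (_ + _).
apply: eq_bigr => i _; rewrite !mxE /=.
by rewrite inord_val mulrC.
Qed.

Lemma Pg_neq0 g : oriented_hyperplane g -> Pg g != 0.
Proof.
case=> [g1|g2]; apply/negP => /eqP P0.
  move/negP: g1; apply; apply/eqP/rowP => i.
  have := congr1 (fun p : {poly R} => p`_i.+1) P0.
  by rewrite coef_poly coef0 ltnS ltn_ord /= inord_val mxE.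
move/negP: g2; apply; apply/eqP.
by have := congr1 (fun p : {poly R} => p`_0) P0; rewrite coef_poly coef0 /=.
Qed.

Lemma muk_mass k : mass_distribution (muk k).
Proof.
split; [|split].
- by rewrite mukE preimage_setT setTI Ik1 lte01.
- by rewrite mukE preimage_setT setTI Ik1 ltry.
move=> g g1; rewrite mukE.
have gn0 : Pg g != 0 by apply: Pg_neq0; left.
have -> : gam @^-1` [set x : Rd R d | affine_eval g x = 0] `&` Ik k =
    [set` roots (Pg g) k%:R (k%:R + 1)].
  apply/seteqP; split => t /=.
    move=> [Ht tin]; rewrite -root_is_roots //.
    by rewrite /root Pg_horner Ht.
  move=> Ht; split; last exact: roots_in Ht.
  by have := root_roots Ht; rewrite /root Pg_horner => /eqP.
apply: countable_lebesgue_measure0; apply: finite_set_countable.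
exact: finite_seq.
Qed.


Lemma exists_root (n : nat) (L : 'I_n -> 'rV[R]_d * R)
  (hL : forall j, oriented_hyperplane (L j)) k :
  muk k (Rplus L) = muk k (Rminus L) ->
  exists jr : 'I_n * R, root (Pg (L jr.1)) jr.2 /\ jr.2 \in `]k%:R, k%:R + 1[.
Proof.
move=> Hb; apply: contrapT => Hno.
have nor j : {in `]k%:R, k%:R + 1[, forall x, ~~ root (Pg (L j)) x}.
  move=> r Hr; apply/negP => Hroot; apply: Hno; by exists (j, r).
pose t0 : R := k%:R + 2^-1.
have t0in : t0 \in `]k%:R, k%:R + 1[.
  rewrite in_itv /= ltrDl invr_gt0 ltr0n /= ltrD2l invf_lt1 //.
  by rewrite ltr1n.
have Hlam t : t \in `]k%:R, k%:R + 1[ -> lambda L (gam t) = lambda L (gam t0).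
  move=> tin; rewrite /lambda.
  suff -> : [set j : 'I_n | `[< pos_side (L j) (gam t) >]] =
            [set j : 'I_n | `[< pos_side (L j) (gam t0) >]] by [].
  have E j : (0 <= (Pg (L j)).[t]) = (0 <= (Pg (L j)).[t0]).
    by rewrite -[LHS]sgr_ge0 -[RHS]sgr_ge0 ((polyrN0_itv (nor j)) t0 t t0in tin).
  apply/seteqP; split => j; rewrite /mkset /pos_side /mkset; cbv beta;
    by rewrite -!Pg_horner E.
move: Hb; rewrite !mukE.
case Hb0 : (odd (lambda L (gam t0))).
  have -> : gam @^-1` Rplus L `&` Ik k = set0.
    apply/seteqP; split => t //= [Ht tin].
    by move: Ht; rewrite /Rplus /= Hlam // Hb0.
  have -> : gam @^-1` Rminus L `&` Ik k = Ik k.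
    apply/seteqP; split => t /=; first by case.
    by move=> tin; split => //; rewrite /Rminus /= Hlam // Hb0.
  by rewrite measure0 Ik1 => H; move: (@lte01 R); rewrite H ltxx.
have -> : gam @^-1` Rminus L `&` Ik k = set0.
  apply/seteqP; split => t //= [Ht tin].
  by move: Ht; rewrite /Rminus /= Hlam // Hb0.
have -> : gam @^-1` Rplus L `&` Ik k = Ik k.
  apply/seteqP; split => t /=; first by case.
  by move=> tin; split => //; rewrite /Rplus /= Hlam // Hb0.
by rewrite measure0 Ik1 => H; move: (@lte01 R); rewrite H ltxx.
Qed.

End S.

From mathcomp Require Import zify.
Unset Implicit Arguments.
Set Strict Implicit.

Theorem mainTheorem9 (R : realType) (n d : nat) :
  (0 < n)%N -> (0 < d)%N ->
  exists mu : 'I_(n * d + 1) -> {measure set (Rd R d) -> \bar R},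
    (forall i, mass_distribution (mu i)) /\
    forall L : 'I_n -> 'rV[R]_d * R,
      (forall j, oriented_hyperplane (L j)) -> ~ bisects L mu.
Proof.
move=> n0; case: d => // d' _.
exists (fun k => @muk R d' k); split; first by move=> i; exact: muk_mass.
move=> L hL Hb.
have H k := exists_root hL (Hb k).
have [f Hf] := choice H.
pose N := (n * d'.+1)%N.
pose s (j : 'I_n) := roots (Pg (L j)) 0 (N.+1)%:R.
pose idx (k : 'I_(N + 1)) := index (f k).2 (s (f k).1).
pose h (k : 'I_(N + 1)) := ((f k).1 * d'.+1 + idx k)%N.
have fin k : (f k).2 \in s (f k).1.
  have [Hr Hin] := Hf k.
  rewrite -root_is_roots //; first by apply: Pg_neq0.
  move: Hin; rewrite !in_itv /= => /andP [H1 H2]; apply/andP; split.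
    by apply: le_lt_trans H1.
  apply: (lt_le_trans H2); rewrite -natr1 lerD2r ler_nat.
  by move: (ltn_ord k); rewrite /N; lia.
have sz j : (size (s j) <= d'.+1)%N.
  have Hall : all (root (Pg (L j))) (s j) by apply/allP => x; apply: root_roots.
  have Hu : uniq (s j) by exact: lt_sorted_uniq (sorted_roots _ _ _).
  have := max_poly_roots (Pg_neq0 (hL j)) Hall Hu.
  move=> Hlt; rewrite -ltnS; apply: (leq_trans Hlt); exact: size_poly.
have idxlt k : (idx k < d'.+1)%N.
  by apply: (leq_trans _ (sz (f k).1)); rewrite index_mem.
have hlt k : (h k < N)%N.
  have := ltn_ord (f k).1; have := idxlt k; rewrite /h /N; nia.
have hinj : injective h.
  move=> k1 k2 E.
  have E1 : (f k1).1 = (f k2).1.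
    apply: val_inj; have := congr1 (fun x => x %/ d'.+1)%N E.
    by rewrite /h !divnMDl // !divn_small ?idxlt // !addn0.
  have E2 : idx k1 = idx k2.
    have := congr1 (fun x => x %% d'.+1)%N E.
    by rewrite /h !modnMDl !modn_small ?idxlt.
  have Er : (f k1).2 = (f k2).2.
    rewrite -(nth_index 0 (fin k1)) -(nth_index 0 (fin k2)).
    by move: E2; rewrite /idx E1 => ->.
  have [_ I1] := Hf k1; have [_ I2] := Hf k2.
  rewrite Er !in_itv /= in I1 I2.
  case/andP: I1 => a1 b1; case/andP: I2 => a2 b2.
  apply: val_inj; apply/eqP; rewrite eqn_leq.
  have l1 : (k1 < k2.+1)%N.
    by rewrite -(ltr_nat R) -natr1; apply: lt_trans a1 b2.
  have l2 : (k2 < k1.+1)%N.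
    by rewrite -(ltr_nat R) -natr1; apply: lt_trans a2 b1.
  by rewrite -ltnS l1 -ltnS l2.
have := @uniq_leq_size _ (map h (enum 'I_(N + 1))) (iota 0 N).
rewrite map_inj_uniq // enum_uniq size_map size_enum_ord size_iota.
move=> /(_ isT) H2.
have : (N + 1 <= N)%N.
  apply: H2 => x /mapP [k _ ->]; rewrite mem_iota add0n; exact: hlt.
by rewrite addn1 ltnn.
Qed.
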